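(* Let $n$ be a positive integer and let $\mathcal M_{n^2}$ be the set of integer matrices $\begin{pmatrix}a&b\\c&d\end{pmatrix}$ with $ad-bc=n^2$ and $\gcd(a,b,c,d)=1$. A complete set of representatives of the inequivalent parabolic elements of $\mathcal M_{n^2}$ is $$\begin{pmatrix}n&a\\0&n\end{pmatrix},\qquad a=1,\dots,n,\ \gcd(a,n)=1.$$
   Context: An element of $\mathcal M_{n^2}$ is parabolic if it fixes exactly one point of $\mathbb P^1(\mathbb Q)$ and no other point of $\mathbb P^1(\mathbb C)$ (a single cusp). Two parabolic elements $\gamma_1,\gamma_2$ are equivalent if there exist $\sigma\in\mathrm{SL}(2,\mathbb Z)$ and $\alpha$ in the stabilizer in $\mathrm{SL}(2,\mathbb Z)$ of the cusp fixed by $\gamma_2$ such that $\sigma\gamma_1\sigma^{-1}=\alpha\gamma_2$. *)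

(* Defs.v *)
From HB Require Import structures.
From mathcomp Require Import all_boot all_order all_algebra all_field.
Set Implicit Arguments. Unset Strict Implicit. Unset Printing Implicit Defensive.
Import Order.TTheory GRing.Theory Num.Theory.
Local Open Scope ring_scope.

Definition ea (A : 'M[int]_2) : int := A 0 0.
Definition eb (A : 'M[int]_2) : int := A 0 1.
Definition ec (A : 'M[int]_2) : int := A 1 0.
Definition ed (A : 'M[int]_2) : int := A 1 1.

Definition inM (n : nat) (A : 'M[int]_2) : Prop :=
  ea A * ed A - eb A * ec A = (n ^ 2)%N%:Z /\
  gcdz (gcdz (ea A) (eb A)) (gcdz (ec A) (ed A)) = 1.

(* A fixes the point [x : y] of P^1(C) (Moebius action z |-> (az+b)/(cz+d)):
   [a x + b y : c x + d y] = [x : y], i.e. the 2x2 determinant vanishes. *)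
Definition fixesP1 (A : 'M[int]_2) (x y : algC) : Prop :=
  ((ea A)%:~R * x + (eb A)%:~R * y) * y = ((ec A)%:~R * x + (ed A)%:~R * y) * x.

Definition parabolic (A : 'M[int]_2) : Prop :=
  exists p q : rat, (p, q) != (0, 0) /\ fixesP1 A (ratr p) (ratr q) /\
    forall x y : algC, (x, y) != (0, 0) -> fixesP1 A x y ->
      x * ratr q = y * ratr p.

Definition equivalent (g1 g2 : 'M[int]_2) : Prop :=
  exists sigma alpha : 'M[int]_2,
    \det sigma = 1 /\ \det alpha = 1 /\
    (forall p q : rat, (p, q) != (0, 0) -> fixesP1 g2 (ratr p) (ratr q) ->
       fixesP1 alpha (ratr p) (ratr q)) /\
    sigma *m g1 = alpha *m g2 *m sigma.

Definition rep (n a : nat) : 'M[int]_2 :=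
  \matrix_(i < 2, j < 2)
    (if i == j then n%:Z else if (i < j)%N then a%:Z else 0).

(* Main.v *)
Require Import Defs.
From HB Require Import structures.
From mathcomp Require Import all_boot all_order all_algebra all_field.
From mathcomp Require Import zify ring lra.
Import Order.TTheory GRing.Theory Num.Theory.
Local Open Scope ring_scope.

Lemma unit_int (e g : int) : e * g = 1 -> (e = 1 /\ g = 1) \/ (e = -1 /\ g = -1).
Proof. move=> H. have := intUnitRing.unitzPl H. rewrite /intUnitRing.unitz.
move=> /orP [] /eqP Hg; subst; [left|right]; split; lia. Qed.

Lemma det2 (M : 'M[int]_2) : \det M = M 0 0 * M 1 1 - M 0 1 * M 1 0.
Proof. rewrite (expand_det_row _ 0) !big_ord_recl big_ord0 /cofactor !det_mx11 /= !mxE /=.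
set l1 := lift _ _. set l2 := lift l1 _.
have -> : l2 = 0 by apply/val_inj.
have -> : l1 = 1 by apply/val_inj.
have -> : (ord0 : 'I_2) = 0 by apply/val_inj.
rewrite /bump /=. rewrite expr0 expr1. ring.
Qed.
Definition mk2 (a b c d : int) : 'M[int]_2 :=
  \matrix_(i < 2, j < 2) if i == 0 then (if j == 0 then a else b) else (if j == 0 then c else d).
Lemma ord2P (i : 'I_2) : i = 0 \/ i = 1.
Proof. case: i => [[|[|k]]] Hk; [left|right|]; try by apply/val_inj. by []. Qed.
Lemma mk2_eta (A : 'M[int]_2) : A = mk2 (ea A) (eb A) (ec A) (ed A).
Proof. apply/matrixP=> i j; rewrite mxE /ea /eb /ec /ed.
by case: (ord2P i) => ->; case: (ord2P j) => ->. Qed.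
Lemma mk2E a b c d : [/\ mk2 a b c d 0 0 = a, mk2 a b c d 0 1 = b, mk2 a b c d 1 0 = c & mk2 a b c d 1 1 = d].
Proof. by rewrite !mxE. Qed.
Lemma mk2_mul a b c d a' b' c' d' : mk2 a b c d *m mk2 a' b' c' d' =
  mk2 (a*a' + b*c') (a*b' + b*d') (c*a' + d*c') (c*b'+d*d').
Proof. apply/matrixP=> i j; rewrite !mxE !big_ord_recl big_ord0 !mxE /=.
by case: (ord2P i) => ->; case: (ord2P j) => ->; rewrite /= addr0. Qed.
Lemma mk2_det a b c d : \det (mk2 a b c d) = a * d - b * c.
Proof. by rewrite det2 !mxE. Qed.
Lemma mk2_inj a b c d a' b' c' d' : mk2 a b c d = mk2 a' b' c' d' ->
  [/\ a = a', b = b', c = c' & d = d'].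
Proof. move=> H; have := congr1 (fun M : 'M[int]_2 => (M 0 0, M 0 1, M 1 0, M 1 1)) H.
by rewrite !mxE /= => -[]. Qed.
Lemma rep_mk2 n a : rep n a = mk2 n a 0 n.
Proof. apply/matrixP=> i j; rewrite !mxE.
by case: (ord2P i) => ->; case: (ord2P j) => ->. Qed.
Definition fixZ (a b c d X Y : int) : Prop := (a*X + b*Y)*Y = (c*X + d*Y)*X.

Lemma decomp (a b c d u v s t : int) : u*s+v*t = 1 -> fixZ a b c d u v ->
  exists x y z : int, [/\ a = x*u*s - (y*u - z*t)*v, b = x*u*t + (y*u - z*t)*u,
     c = x*v*s - (y*v+z*s)*v & d = x*v*t + (y*v+z*s)*u].
Proof.
rewrite /fixZ => H1 H2.
set P := a*u + b*v; set Q := c*u + d*v; set R := -(a*t) + b*s; set S := -(c*t) + d*s.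
set x := s*P + t*Q; set y := s*R + t*S; set z := -(v*R) + u*S.
have F1 : P = x*u.
  transitivity (P*(u*s+v*t)); first by rewrite H1 mulr1.
  rewrite /x; transitivity (s*P*u + t*(P*v)); first by (unfold x, y, z, P, Q, R, S; ring).
  rewrite H2; (unfold x, y, z, P, Q, R, S; ring).
have F2 : Q = x*v.
  transitivity (Q*(u*s+v*t)); first by rewrite H1 mulr1.
  transitivity (s*(Q*u) + t*Q*v); first by (unfold x, y, z, P, Q, R, S; ring).
  rewrite -H2; (unfold x, y, z, P, Q, R, S; ring).
have F3 : R = y*u - z*t.
  transitivity (R*(u*s+v*t)); first by rewrite H1 mulr1.
  rewrite /y /z; (unfold x, y, z, P, Q, R, S; ring).
have F4 : S = y*v + z*s.
  transitivity (S*(u*s+v*t)); first by rewrite H1 mulr1.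
  rewrite /y /z; (unfold x, y, z, P, Q, R, S; ring).
exists x, y, z; split; rewrite -?F1 -?F2 -?F3 -?F4.
- transitivity (a*(u*s+v*t)); first by rewrite H1 mulr1.
  rewrite /P /R; (unfold x, y, z, P, Q, R, S; ring).
- transitivity (b*(u*s+v*t)); first by rewrite H1 mulr1.
  rewrite /P /R; (unfold x, y, z, P, Q, R, S; ring).
- transitivity (c*(u*s+v*t)); first by rewrite H1 mulr1.
  rewrite /Q /S; (unfold x, y, z, P, Q, R, S; ring).
- transitivity (d*(u*s+v*t)); first by rewrite H1 mulr1.
  rewrite /Q /S; (unfold x, y, z, P, Q, R, S; ring).
Qed.

Ltac dv := repeat first [ assumption | apply: rpredB | apply: rpredD | rewrite rpredN | apply: dvdz_mulr | apply: dvdz_mull ].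

Lemma core (n : nat) (x y z u v s t : int) : (0 < n)%N -> u*s+v*t = 1 ->
  let a := x*u*s - (y*u - z*t)*v in let b := x*u*t + (y*u - z*t)*u in
  let c := x*v*s - (y*v+z*s)*v in let d := x*v*t + (y*v+z*s)*u in
  a*d - b*c = (n ^ 2)%N%:Z -> gcdz (gcdz a b) (gcdz c d) = 1 ->
  (forall X Y, (X,Y) != (0,0) -> fixZ a b c d X Y -> X*v = Y*u) ->
  exists a' : nat, [/\ (1 <= a' <= n)%N, coprime a' n &
    exists e f : int, e*e = 1 /\
    mk2 s t (-v) u *m mk2 a b c d = mk2 e f 0 e *m mk2 n a' 0 n *m mk2 s t (-v) u].
Proof.
move=> hn H1 a b c d Hdet Hgcd Hu.
have Hxz : x*z = (n^2)%N%:Z.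
  rewrite -Hdet; transitivity (x*z*(u*s+v*t)^+2); first by rewrite H1 expr1n mulr1.
  rewrite /a /b /c /d; ring.
have Exz : z = x.
  set X := u*y - t*(z-x); set Y := v*y + s*(z-x).
  have HXY : X*v = Y*u.
    have [/eqP E|NE] := boolP ((X,Y) == (0,0)).
      by case: E => -> ->; rewrite !mul0r.
    apply: Hu NE _; rewrite /fixZ /X /Y /a /b /c /d; ring.
  have : (z - x)*(u*s+v*t) = 0.
    transitivity (Y*u - X*v); first by rewrite /X /Y; ring.
    by rewrite HXY subrr.
  by rewrite H1 mulr1 => /eqP; rewrite subr_eq0 => /eqP.
subst z.
have [e [He Hx]] : exists e : int, (e = 1 \/ e = -1) /\ x = e * n%:Z.
  have : (x - n%:Z) * (x + n%:Z) = 0 by move: Hxz; nia.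
  move/eqP; rewrite mulf_eq0 => /orP [] /eqP E.
    by exists 1; split; [left|]; lia.
  by exists (-1); split; [right|]; lia.
have Hee : e * e = 1 by case: He => ->.
have [f0 [a' [Ha'b Hya]]] : exists (f0 : int) (a' : nat), (1 <= a' <= n)%N /\ e*y = f0*n%:Z + a'%:Z.
  have hn0 : n%:Z != 0 by lia.
  have Hr0 := modz_ge0 (e*y - 1) hn0.
  have Hrn : ((e*y-1) %% n%:Z)%Z < n%:Z by apply: ltz_pmod; lia.
  have Hd := divz_eq (e*y - 1) n%:Z.
  exists ((e*y-1) %/ n%:Z)%Z, (absz ((e*y-1) %% n%:Z)%Z).+1.
  move: Hr0 Hrn Hd; move: ((e*y-1) %/ n%:Z)%Z ((e*y-1) %% n%:Z)%Z => q r.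
  move=> Hr0 Hrn Hd. have Hab : (absz r)%:Z = r by apply: gez0_abs.
  split; first by lia.
  rewrite -addn1 PoszD Hab. lia.
have Hy : y = e * (f0 * n%:Z + a'%:Z) by rewrite -Hya mulrA Hee mul1r.
exists a'; split => //.
  set G := gcdn a' n.
  have GdA : (G%:Z %| a'%:Z)%Z by rewrite dvdzE /= dvdn_gcdl.
  have GdN : (G%:Z %| n%:Z)%Z by rewrite dvdzE /= dvdn_gcdr.
  have Gx : (G%:Z %| x)%Z by rewrite Hx; apply: dvdz_mull.
  have Gy : (G%:Z %| y)%Z by rewrite Hy; apply: dvdz_mull; apply: rpredD => //; apply: dvdz_mull.
  have : (G%:Z %| gcdz (gcdz a b) (gcdz c d))%Z.
    rewrite !dvdz_gcd.
    by rewrite /a /b /c /d; apply/andP; split; apply/andP; split; dv.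
  by rewrite Hgcd dvdz1.
exists e, (e*f0); split => //.
rewrite !mk2_mul; subst x y; congr mk2;
  (match goal with |- _ = ?R => transitivity ((u*s+v*t)*R); [ | by rewrite H1 mul1r] end);
  rewrite /a /b /c /d; ring.
Qed.

Lemma fixesP1_int A (X Y : int) : fixesP1 A X%:~R Y%:~R <-> fixZ (ea A) (eb A) (ec A) (ed A) X Y.
Proof.
rewrite /fixesP1 /fixZ -!intrM -!intrD -!intrM; split => [/intr_inj | ->] //.
Qed.

Lemma fixesP1_scale A (K x y : algC) : K != 0 -> (fixesP1 A (K*x) (K*y) <-> fixesP1 A x y).
Proof.
move=> hK; rewrite /fixesP1.
set a := (ea A)%:~R; set b := (eb A)%:~R; set c := (ec A)%:~R; set d := (ed A)%:~R.
have -> : (a * (K * x) + b * (K * y)) * (K * y) = (K*K) * ((a*x + b*y)*y) by ring.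
have -> : (c * (K * x) + d * (K * y)) * (K * x) = (K*K) * ((c*x + d*y)*x) by ring.
have hKK : K * K != 0 by rewrite mulf_neq0.
split => [/(mulfI hKK) | ->] //.
Qed.

Lemma rat_prim (p q : rat) : (p, q) != (0, 0) ->
  exists (u v s t : int) (k : rat), [/\ k != 0, p = k * u%:~R, q = k * v%:~R & u*s + v*t = 1].
Proof.
move=> Hpq.
set u0 := numq p * denq q; set v0 := numq q * denq p.
set D := denq p * denq q.
have hD : D != 0 by rewrite mulf_neq0 ?denq_neq0.
have Hp : p * D%:~R = u0%:~R by rewrite /u0 /D !intrM numqE; ring.
have Hq : q * D%:~R = v0%:~R by rewrite /v0 /D !intrM numqE; ring.
set g := gcdz u0 v0.
have hg : g != 0.
  rewrite /g gcdz_eq0; apply/negP => /andP [/eqP hu /eqP hv].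
  move: Hpq; rewrite xpair_eqE; apply/negP; rewrite negbK.
  move: hu hv; rewrite /u0 /v0 => /eqP hu /eqP hv.
  move: hu hv; rewrite !mulf_eq0 !denq_eq0 !orbF !numq_eq0 => -> ->. by [].
have [s0 [t0 Hb]] := Bezoutz u0 v0.
set u := (u0 %/ g)%Z; set v := (v0 %/ g)%Z.
have Hu : u * g = u0 by apply: divzK; apply: dvdz_gcdl.
have Hv : v * g = v0 by apply: divzK; apply: dvdz_gcdr.
exists u, v, s0, t0, (g%:~R / D%:~R); split.
- by rewrite mulf_neq0 ?invr_eq0 ?intr_eq0.
- apply: (mulIf (_ : D%:~R != 0)); first by rewrite intr_eq0.
  rewrite Hp -Hu intrM; field; by rewrite intr_eq0.
- apply: (mulIf (_ : D%:~R != 0)); first by rewrite intr_eq0.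
  rewrite Hq -Hv intrM; field; by rewrite intr_eq0.
- apply: (mulIf hg); rewrite mul1r; transitivity (s0*u0 + t0*v0); last exact: Hb.
  rewrite -Hu -Hv; ring.
Qed.

Lemma rep_fix n a (x y : algC) : (0 < a)%N -> fixesP1 (rep n a) x y -> y = 0.
Proof.
move=> ha; rewrite /fixesP1 /ea /eb /ec /ed rep_mk2 !mxE /= => H.
have hA : ((a%:Z)%:~R : algC) != 0 by rewrite intr_eq0; apply/eqP; lia.
have : ((a%:Z)%:~R : algC) * (y * y) = 0.
  transitivity (((n%:Z)%:~R * x + (a%:Z)%:~R * y) * y - ((0:int)%:~R * x + (n%:Z)%:~R * y) * x).
    by rewrite mulr0z; ring.
  by rewrite H subrr.
by move/eqP; rewrite !mulf_eq0 (negbTE hA) orbb /= => /eqP.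
Qed.

Lemma rep_fix10 n a : fixesP1 (rep n a) (ratr 1) (ratr 0).
Proof. by rewrite rmorph1 rmorph0 /fixesP1 /ea /eb /ec /ed rep_mk2 !mxE /= mulr0z; ring. Qed.

Theorem lemma4 (n : nat) (hn : (0 < n)%N) :
  (forall a : nat, (1 <= a <= n)%N -> coprime a n ->
      inM n (rep n a) /\ parabolic (rep n a)) /\
  (forall A : 'M[int]_2, inM n A -> parabolic A ->
      exists a : nat, [/\ (1 <= a <= n)%N, coprime a n & equivalent A (rep n a)]) /\
  (forall a a' : nat, (1 <= a <= n)%N -> coprime a n ->
      (1 <= a' <= n)%N -> coprime a' n ->
      equivalent (rep n a) (rep n a') -> a = a').
Proof.
split; [|split].
- move=> a /andP [ha1 han] hco; split.
    rewrite /inM /ea /eb /ec /ed rep_mk2 !mxE /=; split.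
      by rewrite mulr0 subr0 -PoszM expnS expn1.
    by rewrite /gcdz /= gcd0n (gcdnC n a) (eqP hco) gcd1n.
  exists 1, 0; split => //; split; first exact: rep_fix10.
  move=> x y _ H; rewrite (rep_fix _ _ _ _ ha1 H) rmorph0 rmorph1; ring.
- move=> A [Hdet Hgcd] [p [q [Hpq [Hfix Huniq]]]].
  have [u [v [s [t [k [hk Hp Hq H1]]]]]] := rat_prim _ _ Hpq.
  have hK : (ratr k : algC) != 0 by rewrite fmorph_eq0.
  move: Hfix; rewrite Hp Hq !rmorphM /= !ratr_int (fixesP1_scale _ _ _ _ hK) fixesP1_int => H2.
  have Hu : forall X Y : int, (X,Y) != (0,0) -> fixZ (ea A) (eb A) (ec A) (ed A) X Y -> X*v = Y*u.
    move=> X Y HXY HF.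
    have := Huniq X%:~R Y%:~R.
    rewrite xpair_eqE !intr_eq0 -xpair_eqE => /(_ HXY).
    move/(_ (proj2 (fixesP1_int A X Y) HF)).
    rewrite Hp Hq !rmorphM /= !ratr_int => E.
    apply: (@intr_inj algC); apply: (mulfI hK); rewrite !intrM.
    by rewrite mulrCA E mulrCA.
  have [x [y [z [Ea Eb Ec Ed]]]] := decomp _ _ _ _ _ _ _ _ H1 H2.
  have Hc := @core n x y z u v s t hn H1.
  cbv zeta in Hc; rewrite -Ea -Eb -Ec -Ed in Hc.
  have [a' [ha' hco [e [f [Hee Hmat]]]]] := Hc Hdet Hgcd Hu.
  exists a'; split => //.
  exists (mk2 s t (-v) u), (mk2 e f 0 e); split; [|split; [|split]].
  + rewrite mk2_det; rewrite -H1; ring.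
  + by rewrite mk2_det mulr0 subr0.
  + move=> p' q' _ Hf.
    have ha0 : (0 < a')%N by case/andP: ha'.
    rewrite (rep_fix _ _ _ _ ha0 Hf) /fixesP1 /ea /eb /ec /ed !mxE /= mulr0z; ring.
  + by rewrite {1}(mk2_eta A) rep_mk2.
- move=> a a' /andP [ha1 han] hco /andP [ha1' han'] hco' [sig [al [Hds [Hda [Hal Hm]]]]].
  have Hc0 : ec al = 0.
    have := Hal 1 0 isT (rep_fix10 n a').
    have E1 : ratr (1:rat) = ((1:int)%:~R : algC) by rewrite rmorph1.
    have E0 : ratr (0:rat) = ((0:int)%:~R : algC) by rewrite rmorph0.
    rewrite E1 E0 fixesP1_int /fixZ; lia.
  rewrite (mk2_eta sig) (mk2_eta al) !rep_mk2 !mk2_mul in Hm.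
  case/mk2_inj: Hm => E1 E2 E3 E4.
  rewrite (mk2_eta sig) mk2_det in Hds.
  rewrite (mk2_eta al) mk2_det in Hda.
  move: E1 E2 E3 E4 Hds Hda Hc0.
  move: (ea sig) (eb sig) (ec sig) (ed sig) (ea al) (eb al) (ec al) (ed al) => P Q R S e f c g.
  move=> E1 E2 E3 E4 Hds Hda Hc0; subst c.
  have Heg : e * g = 1 by move: Hda; rewrite mulr0 subr0.
  case: (unit_int _ _ Heg) => [[He Hg]|[He Hg]]; subst e g; last first.
    have H3 : R * n%:Z = 0 by lia.
    have HR : R = 0 by move/eqP: H3; rewrite mulf_eq0 => /orP [/eqP //|/eqP]; lia.
    subst R.
    have H5 : P * n%:Z = 0 by lia.
    have HP : P = 0 by move/eqP: H5; rewrite mulf_eq0 => /orP [/eqP //|/eqP]; lia.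
    by move: Hds; rewrite HP; lia.
  have : (a'%:Z + f * n%:Z) * R = 0 by lia.
  move/eqP; rewrite mulf_eq0 => /orP [] /eqP H0.
    have Hf : f = -1.
      case: (ltrgtP f (-1)) => Hf //.
        have : f * n%:Z <= -2 * n%:Z by apply: ler_wpM2r; lia.
        lia.
      have : 0 <= f * n%:Z by apply: mulr_ge0; lia.
      lia.
    have Ha'n : a' = n by subst f; lia.
    subst a'. move: hco'; rewrite /coprime gcdnn => /eqP Hn1. subst n. lia.
  subst R.
  have HPS : P * S = 1 by move: Hds; rewrite mulr0 subr0.
  have Haf : a%:Z = a'%:Z + f * n%:Z.
    case: (unit_int _ _ HPS) => [[HP HS]|[HP HS]]; subst P S; lia.
  have Hf : f = 0.
    case: (ltrgtP f 0) => Hf //.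
      have : f * n%:Z <= -1 * n%:Z by apply: ler_wpM2r; lia.
      lia.
    have : 1 * n%:Z <= f * n%:Z by apply: ler_wpM2r; lia.
    lia.
  subst f; lia.
Qed.
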